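(* Let $S\subseteq\mathbb{C}^2\otimes\mathbb{C}^2$ be a two-dimensional subspace whose orthogonal projector $P_S$ is separable. Then $S$ has an orthonormal basis consisting of product states. Moreover, if $|\psi\rangle$ and $|\Phi\rangle$ are any two orthogonal entangled unit vectors in $S^\perp$, then (i) $\psi\Phi^{-1}$ has two antiparallel eigenvalues, and (ii) $C(\psi)=C(\Phi)$.
   Context: For a two-qubit pure state $|\psi\rangle\in\mathbb{C}^2\otimes\mathbb{C}^2$, $\psi$ denotes the unique $2\times 2$ complex matrix with $|\psi\rangle=(\mathbb{I}\otimes\psi)|\Psi^+\rangle$, where $|\Psi^+\rangle=\tfrac{1}{\sqrt2}(|00\rangle+|11\rangle)$. The concurrence of $|\psi\rangle$ is $C(\psi)=|\det\psi|$; $|\psi\rangle$ is entangled iff $C(\psi)>0$, i.e. iff $\psi$ is invertible. Two complex numbers $z_1,z_2$ are antiparallel if $z_1=az_2$ for some real $a<0$; a $2\times2$ matrix ''has two antiparallel eigenvalues'' if its two eigenvalues are antiparallel. A positive semidefinite operator on $\mathbb{C}^2\otimes\mathbb{C}^2$ is separable if it is a nonnegative linear combination of product projectors $|a\rangle\langle a|\otimes|b\rangle\langle b|$. *)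

(* Defs.v *)
(* The field of complex numbers is modelled by an arbitrary
   numClosedFieldType C (algebraically closed field with conjugation and the
   partial order 0 <= z <-> z real nonnegative). *)
From HB Require Import structures.
From mathcomp Require Import all_boot all_order all_algebra.
Set Implicit Arguments. Unset Strict Implicit. Unset Printing Implicit Defensive.
Import Order.TTheory GRing.Theory Num.Theory.
Local Open Scope ring_scope.

Section Defs.
Variable C : numClosedFieldType.

Definition adj (m n : nat) (A : 'M[C]_(m, n)) : 'M[C]_(n, m) :=
  (map_mx (fun z => z^*) A)^T.

Definition inner (n : nat) (u v : 'cV[C]_n) : C := (adj u *m v) 0 0.

Definition unit_vec (n : nat) (u : 'cV[C]_n) : Prop := inner u u = 1.

(* C^2 (x) C^2 = C^4, basis |a b> <-> index 2*a + b *)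
Definition kronv (u v : 'cV[C]_2) : 'cV[C]_4 :=
  \col_(i < 4) (u (inord (i %/ 2)) 0 * v (inord (i %% 2)) 0).

Definition kronm (A B : 'M[C]_2) : 'M[C]_4 :=
  \matrix_(i < 4, j < 4)
     (A (inord (i %/ 2)) (inord (j %/ 2)) * B (inord (i %% 2)) (inord (j %% 2))).

Definition ketbra (n : nat) (a : 'cV[C]_n) : 'M[C]_n := a *m adj a.

Definition separable (P : 'M[C]_4) : Prop :=
  exists (k : nat) (t : 'I_k -> C) (a b : 'I_k -> 'cV[C]_2),
    (forall i, 0 <= t i) /\ (forall i, unit_vec (a i)) /\
    (forall i, unit_vec (b i)) /\
    P = \sum_(i < k) t i *: kronm (ketbra (a i)) (ketbra (b i)).

(* the matrix psi with |psi> = (I (x) psi)|Psi+>, |Psi+> = (|00>+|11>)/sqrt 2;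
   component <a b|psi> = psi_{b a} / sqrt 2 *)
Definition assoc_mx (v : 'cV[C]_4) : 'M[C]_2 :=
  \matrix_(b < 2, a < 2) (sqrtC 2 * v (inord (2 * a + b)) 0).

Definition concurrence (v : 'cV[C]_4) : C := `|\det (assoc_mx v)|.

Definition entangled (v : 'cV[C]_4) : Prop := concurrence v > 0.

Definition product_state (v : 'cV[C]_4) : Prop :=
  exists a b : 'cV[C]_2, v = kronv a b.

Definition antiparallel (z1 z2 : C) : Prop :=
  exists a : C, a \is Num.real /\ a < 0 /\ z1 = a * z2.

Definition two_antiparallel_eigenvalues (M : 'M[C]_2) : Prop :=
  exists z1 z2 : C, char_poly M = ('X - z1%:P) * ('X - z2%:P) /\ antiparallel z1 z2.

Definition orth_proj2 (P : 'M[C]_4) : Prop :=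
  adj P = P /\ P *m P = P /\ \rank P = 2%N.

Definition in_range (P : 'M[C]_4) (v : 'cV[C]_4) : Prop := P *m v = v.

Definition in_perp (P : 'M[C]_4) (v : 'cV[C]_4) : Prop :=
  forall w, in_range P w -> inner w v = 0.

End Defs.

(* Main.v *)
Require Import Defs.
From HB Require Import structures.
From mathcomp Require Import all_boot all_order all_algebra.
From mathcomp Require Import ring lra.
Import Order.TTheory GRing.Theory Num.Theory.
Local Open Scope ring_scope.
Set Implicit Arguments. Unset Strict Implicit. Unset Printing Implicit Defensive.
Section A.
Variable C : numClosedFieldType.
Implicit Types (u v w : 'cV[C]_4) (a b c d : 'cV[C]_2).

Lemma sum2 (F : 'I_2 -> C) : \sum_(i < 2) F i = F (inord 0) + F (inord 1).
Proof.
rewrite !big_ord_recr big_ord0 /= add0r; congr (F _ + F _); apply/val_inj;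
by rewrite /= inordK.
Qed.

Lemma sum4 (F : 'I_4 -> C) :
  \sum_(i < 4) F i = F (inord 0) + F (inord 1) + F (inord 2) + F (inord 3).
Proof.
rewrite !big_ord_recr big_ord0 /= add0r; congr (F _ + F _ + F _ + F _);
apply/val_inj; by rewrite /= inordK.
Qed.

Lemma innerE n (u v : 'cV[C]_n) : inner u v = \sum_i (u i 0)^* * v i 0.
Proof. by rewrite /inner mxE; apply: eq_bigr => i _; rewrite !mxE. Qed.

Lemma inner2 a b : inner a b =
  (a (inord 0) 0)^* * b (inord 0) 0 + (a (inord 1) 0)^* * b (inord 1) 0.
Proof. by rewrite innerE sum2. Qed.

Lemma inner4 u v : inner u v =
  (u (inord 0) 0)^* * v (inord 0) 0 + (u (inord 1) 0)^* * v (inord 1) 0 +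
  (u (inord 2) 0)^* * v (inord 2) 0 + (u (inord 3) 0)^* * v (inord 3) 0.
Proof. by rewrite innerE sum4. Qed.

Lemma vec2P a b : a (inord 0) 0 = b (inord 0) 0 -> a (inord 1) 0 = b (inord 1) 0 -> a = b.
Proof.
move=> h0 h1; apply/matrixP => i j; rewrite (ord1 j).
case: i => [[|[|k]] Hk] //.
- by have -> : Ordinal Hk = inord 0 by apply/val_inj; rewrite /= inordK.
- by have -> : Ordinal Hk = inord 1 by apply/val_inj; rewrite /= inordK.
Qed.

Lemma vec4P u v : u (inord 0) 0 = v (inord 0) 0 -> u (inord 1) 0 = v (inord 1) 0 ->
  u (inord 2) 0 = v (inord 2) 0 -> u (inord 3) 0 = v (inord 3) 0 -> u = v.
Proof.
move=> h0 h1 h2 h3; apply/matrixP => i j; rewrite (ord1 j).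
case: i => [[|[|[|[|k]]]] Hk] //.
- by have -> : Ordinal Hk = inord 0 by apply/val_inj; rewrite /= inordK.
- by have -> : Ordinal Hk = inord 1 by apply/val_inj; rewrite /= inordK.
- by have -> : Ordinal Hk = inord 2 by apply/val_inj; rewrite /= inordK.
- by have -> : Ordinal Hk = inord 3 by apply/val_inj; rewrite /= inordK.
Qed.

Lemma kronv0 a b : kronv a b (inord 0) 0 = a (inord 0) 0 * b (inord 0) 0.
Proof. by rewrite mxE inordK. Qed.
Lemma kronv1 a b : kronv a b (inord 1) 0 = a (inord 0) 0 * b (inord 1) 0.
Proof. by rewrite mxE inordK. Qed.
Lemma kronv2 a b : kronv a b (inord 2) 0 = a (inord 1) 0 * b (inord 0) 0.
Proof. by rewrite mxE inordK. Qed.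
Lemma kronv3 a b : kronv a b (inord 3) 0 = a (inord 1) 0 * b (inord 1) 0.
Proof. by rewrite mxE inordK. Qed.

Definition kronvE := (kronv0, kronv1, kronv2, kronv3).

Lemma inner_kron a b c d : inner (kronv a b) (kronv c d) = inner a c * inner b d.
Proof. rewrite inner4 !inner2 !kronvE !rmorphM; ring. Qed.

End A.
Section B.
Variable C : numClosedFieldType.
Variable n : nat.
Implicit Types (u v w : 'cV[C]_n).

Lemma innerDr u v w : inner u (v + w) = inner u v + inner u w.
Proof. rewrite !innerE -big_split /=; apply: eq_bigr => i _; rewrite mxE; ring. Qed.
Lemma innerDl u v w : inner (v + w) u = inner v u + inner w u.
Proof. rewrite !innerE -big_split /=; apply: eq_bigr => i _; rewrite mxE rmorphD; ring. Qed.
Lemma innerZr u v (k : C) : inner u (k *: v) = k * inner u v.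
Proof. rewrite !innerE mulr_sumr; apply: eq_bigr => i _; rewrite mxE; ring. Qed.
Lemma innerZl u v (k : C) : inner (k *: v) u = k^* * inner v u.
Proof. rewrite !innerE mulr_sumr; apply: eq_bigr => i _; rewrite mxE rmorphM; ring. Qed.
Lemma inner_conj u v : inner v u = (inner u v)^*.
Proof. rewrite !innerE rmorph_sum; apply: eq_bigr => i _; by rewrite rmorphM /= conjCK mulrC. Qed.
Lemma inner0r u : inner u 0 = 0.
Proof. by rewrite innerE big1 // => i _; rewrite mxE mulr0. Qed.
Lemma inner0l u : inner 0 u = 0.
Proof. by rewrite innerE big1 // => i _; rewrite mxE rmorph0 mul0r. Qed.
Lemma innerNr u v : inner u (- v) = - inner u v.
Proof. by rewrite -scaleN1r innerZr mulN1r. Qed.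
Lemma innerBr u v w : inner u (v - w) = inner u v - inner u w.
Proof. by rewrite innerDr innerNr. Qed.
Lemma innerNl u v : inner (- v) u = - inner v u.
Proof. by rewrite -scaleN1r innerZl rmorphN1 mulN1r. Qed.
Lemma innerBl u v w : inner (v - w) u = inner v u - inner w u.
Proof. by rewrite innerDl innerNl. Qed.
Lemma inner_sumr u (I : finType) (F : I -> 'cV[C]_n) :
  inner u (\sum_i F i) = \sum_i inner u (F i).
Proof.
rewrite innerE.
under eq_bigr => i _ do rewrite summxE mulr_sumr.
rewrite exchange_big /=; apply: eq_bigr => j _; by rewrite innerE.
Qed.

Lemma inner_self_ge0 u : 0 <= inner u u.
Proof.
rewrite innerE; apply: sumr_ge0 => i _; rewrite mulrC -normCK; exact: exprn_ge0.
Qed.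

Lemma inner_self_eq0 u : inner u u = 0 -> u = 0.
Proof.
rewrite innerE => /eqP; rewrite psumr_eq0 => [/allP H|i _]; last first.
  by rewrite mulrC -normCK exprn_ge0.
apply/matrixP => i j; rewrite (ord1 j) mxE.
have := H i (mem_index_enum i); rewrite mulrC -normCK sqrf_eq0 normr_eq0.
by move=> /eqP.
Qed.

Lemma inner_adj (A : 'M[C]_n) u v : inner (A *m u) v = inner u (adj A *m v).
Proof.
rewrite !innerE.
under eq_bigr => i _ do rewrite mxE rmorph_sum mulr_suml.
under [RHS]eq_bigr => i _ do rewrite mxE mulr_sumr.
rewrite exchange_big /=; apply: eq_bigr => i _; apply: eq_bigr => j _.
rewrite !mxE rmorphM; ring.
Qed.

Lemma ketbra_mul (x y : 'cV[C]_n) : ketbra x *m y = inner x y *: x.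
Proof.
apply/matrixP => i j; rewrite (ord1 j) !mxE innerE mulr_suml.
apply: eq_bigr => k _; rewrite !mxE big_ord1 !mxE; ring.
Qed.

Lemma ketbraZ (x : 'cV[C]_n) (k : C) : ketbra (k *: x) = (k * k^*) *: ketbra x.
Proof.
apply/matrixP => i j; rewrite !mxE !big_ord1 !mxE rmorphM; ring.
Qed.

End B.

Section B2.
Variable C : numClosedFieldType.
Lemma kronm_ketbra (a b : 'cV[C]_2) :
  kronm (ketbra a) (ketbra b) = ketbra (kronv a b).
Proof.
apply/matrixP => i j; rewrite !mxE !big_ord1 !mxE rmorphM; ring.
Qed.
End B2.
Section Cc.
Variable C : numClosedFieldType.
Variable n : nat.

Lemma sumP_mul k (t : 'I_k -> C) (x : 'I_k -> 'cV[C]_n) (y : 'cV[C]_n) :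
  (\sum_(i < k) t i *: ketbra (x i)) *m y = \sum_i (t i * inner (x i) y) *: x i.
Proof.
rewrite mulmx_suml; apply: eq_bigr => i _.
by rewrite -scalemxAl ketbra_mul scalerA.
Qed.

Lemma sumP_inner k (t : 'I_k -> C) (x : 'I_k -> 'cV[C]_n) (y z : 'cV[C]_n) :
  inner z ((\sum_(i < k) t i *: ketbra (x i)) *m y) =
  \sum_i t i * inner (x i) y * inner z (x i).
Proof. by rewrite sumP_mul inner_sumr; apply: eq_bigr => i _; rewrite innerZr. Qed.

Lemma F1 k (t : 'I_k -> C) (x : 'I_k -> 'cV[C]_n) (P : 'M[C]_n) :
  adj P = P -> P *m P = P -> (forall i, 0 <= t i) ->
  P = \sum_(i < k) t i *: ketbra (x i) ->
  forall i, 0 < t i -> P *m x i = x i.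
Proof.
move=> hA hI ht hP i0 hti.
set y := x i0 - P *m x i0.
have Py : P *m y = 0 by rewrite mulmxBr mulmxA hI subrr.
have H0 : \sum_i t i * (inner (x i) y * (inner (x i) y)^*) = 0.
  rewrite -[RHS](_ : inner y (P *m y) = 0); last by rewrite Py inner0r.
  rewrite [in RHS]hP sumP_inner.
  by apply: eq_bigr => i _; rewrite (inner_conj (x i) y) mulrA.
have : t i0 * (inner (x i0) y * (inner (x i0) y)^*) == 0.
  move/eqP: H0; rewrite psumr_eq0 => [/allP H|i _].
    exact: H i0 (mem_index_enum _).
  by rewrite -normCK mulr_ge0 // exprn_ge0.
rewrite mulf_eq0 (gt_eqF hti) /= -normCK sqrf_eq0 normr_eq0 => /eqP hxy.
have : inner y y = 0.
  rewrite {1}/y innerBl hxy inner_adj hA Py inner0r subrr //.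
by move=> /inner_self_eq0/eqP; rewrite subr_eq0 => /eqP.
Qed.

End Cc.
Section D.
Variable C : numClosedFieldType.

Lemma det2 (A : 'M[C]_2) : \det A =
  A (inord 0) (inord 0) * A (inord 1) (inord 1) - A (inord 0) (inord 1) * A (inord 1) (inord 0).
Proof.
rewrite (expand_det_row _ (inord 0)) sum2 /cofactor !det_mx11 !mxE.
have -> : lift (inord 0) 0 = inord 1 :> 'I_2 by apply/val_inj; rewrite /= !inordK.
have -> : lift (inord 1) 0 = inord 0 :> 'I_2 by apply/val_inj; rewrite /= !inordK.
rewrite !inordK //= expr0 expr1; ring.
Qed.
End D.
Section D2.
Variable C : numClosedFieldType.
Variable n : nat.

Lemma span2 (P : 'M[C]_n) (x y : 'cV[C]_n) :
  \rank P = 2 -> P *m x = x -> P *m y = y -> inner x x = 1 -> inner y y = 1 ->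
  inner x y * (inner x y)^* != 1 ->
  forall v, P *m v = v -> exists al be : C, v = al *: x + be *: y.
Proof.
move=> rP Px Py nx ny hg v Pv.
pose z (r : 'I_2) := if val r == 0%N then x else y.
pose N := \matrix_(r < 2, c < n) z r c 0.
pose G := \matrix_(c < n, r < 2) (z r c 0)^*.
have hN : N *m P^T = N.
  apply/matrixP => r c; rewrite !mxE.
  have <- : (P *m z r) c 0 = z r c 0 by rewrite /z; case: ifP => _; [rewrite Px|rewrite Py].
  by rewrite mxE; apply: eq_bigr => l _; rewrite !mxE mulrC.
have hNG : forall r r', (N *m G) r r' = inner (z r') (z r).
  by move=> r r'; rewrite mxE innerE; apply: eq_bigr => l _; rewrite !mxE mulrC.
have z0 : z (inord 0) = x by rewrite /z /= inordK.
have z1 : z (inord 1) = y by rewrite /z /= inordK.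
have rN : \rank N = 2%N.
  apply/eqP; rewrite eqn_leq rank_leq_row /=.
  have hr : \rank (N *m G) = 2%N.
    apply: mxrank_unit; rewrite unitmxE unitfE det2 !hNG !z0 !z1 nx ny.
    by rewrite (inner_conj x y) mul1r subr_eq0 eq_sym mulrC.
  by apply: leq_trans (mxrankM_maxl N G); rewrite hr.
have sNP : (N <= P^T)%MS by rewrite -hN submxMl.
have sPN : (P^T <= N)%MS.
  have := mxrank_leqif_sup sNP; rewrite mxrank_tr rP rN => -[_ <-] //.
have : (v^T <= N)%MS.
  apply: submx_trans sPN; rewrite -Pv trmx_mul; exact: submxMl.
move=> /submxP [D hD]; exists (D 0 (inord 0)), (D 0 (inord 1)).
apply/matrixP => c j; rewrite (ord1 j).
have := congr1 (fun M : 'M_(1, n) => M 0 c) hD; rewrite !mxE => ->.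
by rewrite sum2 !mxE z0 z1.
Qed.
End D2.
Section E.
Variable C : numClosedFieldType.
Implicit Types (u v w : 'cV[C]_4) (a b c d : 'cV[C]_2).

Definition det2v a c : C := a (inord 0) 0 * c (inord 1) 0 - a (inord 1) 0 * c (inord 0) 0.
Definition det4 v : C := v (inord 0) 0 * v (inord 3) 0 - v (inord 1) 0 * v (inord 2) 0.
Definition bperp b : 'cV[C]_2 :=
  \col_(i < 2) (if val i == 0%N then - (b (inord 1) 0)^* else (b (inord 0) 0)^*).

Lemma bperp0 b : bperp b (inord 0) 0 = - (b (inord 1) 0)^*.
Proof. by rewrite mxE /= inordK. Qed.
Lemma bperp1 b : bperp b (inord 1) 0 = (b (inord 0) 0)^*.
Proof. by rewrite mxE /= inordK. Qed.
Definition bperpE := (bperp0, bperp1).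

Lemma vD2 (x y : 'cV[C]_2) i : (x + y) i 0 = x i 0 + y i 0. Proof. by rewrite mxE. Qed.
Lemma vZ2 (x : 'cV[C]_2) (k : C) i : (k *: x) i 0 = k * x i 0. Proof. by rewrite mxE. Qed.
Lemma vD4 (x y : 'cV[C]_4) i : (x + y) i 0 = x i 0 + y i 0. Proof. by rewrite mxE. Qed.
Lemma vZ4 (x : 'cV[C]_4) (k : C) i : (k *: x) i 0 = k * x i 0. Proof. by rewrite mxE. Qed.
Definition vE := (vD2, vZ2, vD4, vZ4).

Lemma kronvDr a b c : kronv a (b + c) = kronv a b + kronv a c.
Proof. apply: vec4P; rewrite !(vE, kronvE); ring. Qed.
Lemma kronvDl a b c : kronv (b + c) a = kronv b a + kronv c a.
Proof. apply: vec4P; rewrite !(vE, kronvE); ring. Qed.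
Lemma kronvZr a b (k : C) : kronv a (k *: b) = k *: kronv a b.
Proof. apply: vec4P; rewrite !(vE, kronvE); ring. Qed.
Lemma kronvZl a b (k : C) : kronv (k *: a) b = k *: kronv a b.
Proof. apply: vec4P; rewrite !(vE, kronvE); ring. Qed.

Lemma det4_kron a b : det4 (kronv a b) = 0.
Proof. rewrite /det4 !kronvE; ring. Qed.

Lemma det4_comb a b c d (al be : C) :
  det4 (al *: kronv a b + be *: kronv c d) = al * be * det2v a c * det2v b d.
Proof. rewrite /det4 /det2v !(vE, kronvE); ring. Qed.

Lemma inner_bperp b : inner b (bperp b) = 0.
Proof. rewrite inner2 !bperpE; ring. Qed.
Lemma inner_bperp' b : inner (bperp b) b = 0.
Proof. by rewrite inner_conj inner_bperp rmorph0. Qed.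
Lemma inner_bperp_bperp b : inner (bperp b) (bperp b) = inner b b.
Proof. rewrite !inner2 !bperpE !rmorphN /= !conjCK; ring. Qed.

Lemma decomp2 b (w : 'cV[C]_2) : inner b b = 1 ->
  w = inner b w *: b + inner (bperp b) w *: bperp b.
Proof.
rewrite !inner2 => hb; apply: vec2P; rewrite !(vE, bperpE) ?inner2 ?bperpE ?rmorphN /= ?conjCK.
- transitivity (w (inord 0) 0 * ((b (inord 0) 0)^* * b (inord 0) 0 + (b (inord 1) 0)^* * b (inord 1) 0)).
    by rewrite hb mulr1.
  ring.
- transitivity (w (inord 1) 0 * ((b (inord 0) 0)^* * b (inord 0) 0 + (b (inord 1) 0)^* * b (inord 1) 0)).
    by rewrite hb mulr1.
  ring.
Qed.

Lemma cramer2 b c (w : 'cV[C]_2) : det2v b c *: w = det2v w c *: b + det2v b w *: c.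
Proof. apply: vec2P; rewrite /det2v !vE; ring. Qed.

Lemma lagrange a c : inner a c * (inner a c)^* + det2v a c * (det2v a c)^* =
  inner a a * inner c c.
Proof. rewrite /det2v !inner2 !(rmorphD, rmorphM, rmorphB) /= !conjCK; ring. Qed.

Lemma parallel a c : det2v a c = 0 -> inner a a = 1 -> c = inner a c *: a.
Proof.
rewrite /det2v inner2 => hd ha; apply: vec2P; rewrite !vE inner2.
- transitivity (c (inord 0) 0 * ((a (inord 0) 0)^* * a (inord 0) 0 + (a (inord 1) 0)^* * a (inord 1) 0)).
    by rewrite ha mulr1.
  apply/eqP; rewrite -subr_eq0; apply/eqP.
  transitivity (- (a (inord 1) 0)^* * (a (inord 0) 0 * c (inord 1) 0 - a (inord 1) 0 * c (inord 0) 0)).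
    ring.
  by rewrite hd mulr0.
- transitivity (c (inord 1) 0 * ((a (inord 0) 0)^* * a (inord 0) 0 + (a (inord 1) 0)^* * a (inord 1) 0)).
    by rewrite ha mulr1.
  apply/eqP; rewrite -subr_eq0; apply/eqP.
  transitivity ((a (inord 0) 0)^* * (a (inord 0) 0 * c (inord 1) 0 - a (inord 1) 0 * c (inord 0) 0)).
    ring.
  by rewrite hd mulr0.
Qed.

End E.
Section E2.
Variable C : numClosedFieldType.
Implicit Types (a b c d : 'cV[C]_2).

Lemma norm_lagrange a c : inner a a = 1 -> inner c c = 1 ->
  `|inner a c| ^+ 2 = 1 - `|det2v a c| ^+ 2.
Proof.
move=> ha hc; rewrite !normCK; apply/eqP; by rewrite eq_sym subr_eq lagrange ha hc mulr1.
Qed.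

Lemma normsq_le1 a c : inner a a = 1 -> inner c c = 1 -> `|inner a c| ^+ 2 <= 1.
Proof.
move=> ha hc; rewrite norm_lagrange // lerBlDr lerDl; exact: exprn_ge0.
Qed.

Lemma gneq1 a b c d : inner a a = 1 -> inner b b = 1 -> inner c c = 1 -> inner d d = 1 ->
  (det2v a c != 0) || (det2v b d != 0) ->
  (inner a c * inner b d) * (inner a c * inner b d)^* != 1.
Proof.
move=> ha hb hc hd hdet.
have -> : (inner a c * inner b d) * (inner a c * inner b d)^* =
          `|inner a c| ^+ 2 * `|inner b d| ^+ 2.
  by rewrite !normCK rmorphM; ring.
apply/negP => /eqP hg.
have A1 := normsq_le1 ha hc; have B1 := normsq_le1 hb hd.
have A0 : 0 <= `|inner a c| ^+ 2 by apply: exprn_ge0.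
have B0 : 0 <= `|inner b d| ^+ 2 by apply: exprn_ge0.
have eA : `|inner a c| ^+ 2 = 1.
  apply/le_anti; rewrite A1 /=; rewrite -{1}hg -{2}(mulr1 (`|inner a c| ^+ 2)).
  exact: ler_wpM2l.
have eB : `|inner b d| ^+ 2 = 1.
  apply/le_anti; rewrite B1 /=; rewrite -{1}hg eA mul1r //.
move: hdet; rewrite norm_lagrange // in eA; rewrite norm_lagrange // in eB.
move/eqP: eA; rewrite subr_eq addrC -subr_eq subrr eq_sym sqrf_eq0 normr_eq0 => /eqP ->.
move/eqP: eB; rewrite subr_eq addrC -subr_eq subrr eq_sym sqrf_eq0 normr_eq0 => /eqP ->.
by rewrite eqxx.
Qed.
End E2.
Section F.
Variable C : numClosedFieldType.
Implicit Types (a b c d : 'cV[C]_2).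

Lemma det2vZr a c (k : C) : det2v a (k *: c) = k * det2v a c.
Proof. rewrite /det2v !vE; ring. Qed.

Lemma Pcomb (P : 'M[C]_4) (x y : 'cV[C]_4) (al be : C) : P *m x = x -> P *m y = y ->
  P *m (al *: x + be *: y) = al *: x + be *: y.
Proof. by move=> hx hy; rewrite mulmxDr -!scalemxAr hx hy. Qed.

Lemma inner_unit_neq0 n (x : 'cV[C]_n) : inner x x = 1 -> x != 0.
Proof. by move=> h; apply/eqP => h0; move: h; rewrite h0 inner0r => /eqP; rewrite eq_sym oner_eq0. Qed.

Lemma rank_le1 (P : 'M[C]_4) (x : 'cV[C]_4) (s : C) : P = s *: ketbra x -> (\rank P <= 1)%N.
Proof.
move=> ->; rewrite /ketbra scalemxAl.
exact: leq_trans (mxrankM_maxl _ _) (rank_leq_col _).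
Qed.

End F.
Section F2.
Variable C : numClosedFieldType.

Lemma step3 k (t : 'I_k -> C) (a b : 'I_k -> 'cV[C]_2) (P : 'M[C]_4) :
  (forall i, 0 <= t i) -> (forall i, inner (a i) (a i) = 1) ->
  (forall i, inner (b i) (b i) = 1) ->
  P = \sum_(i < k) t i *: ketbra (kronv (a i) (b i)) -> \rank P = 2%N ->
  exists i j, [/\ 0 < t i, 0 < t j & (det2v (a i) (a j) != 0) || (det2v (b i) (b j) != 0)].
Proof.
move=> ht ha hb hP hR.
have [/existsP [i /existsP [j /and3P [ti tj hij]]] | hno] :=
  boolP [exists i, exists j, [&& 0 < t i, 0 < t j & (det2v (a i) (a j) != 0) || (det2v (b i) (b j) != 0)]].
  by exists i, j.
exfalso.
suff : (\rank P <= 1)%N by rewrite hR.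
have [/existsP [i0 ti0] | hz] := boolP [exists i, 0 < t i].
  have key : forall j, t j *: ketbra (kronv (a j) (b j)) =
     (t j * ((inner (a i0) (a j) * inner (b i0) (b j)) * (inner (a i0) (a j) * inner (b i0) (b j))^*))
       *: ketbra (kronv (a i0) (b i0)).
    move=> j; have := ht j; rewrite le_eqVlt => /orP [/eqP <-|tj].
      by rewrite !scale0r mul0r scale0r.
    have hd : ~~ ((det2v (a i0) (a j) != 0) || (det2v (b i0) (b j) != 0)).
      apply/negP => h; move/negP: hno; apply; apply/existsP; exists i0; apply/existsP; exists j.
      by rewrite ti0 tj h.
    move: hd; rewrite negb_or !negbK => /andP [/eqP da /eqP db].
    rewrite {1}(parallel da (ha i0)) {1}(parallel db (hb i0)) kronvZl kronvZr scalerA ketbraZ.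
    by rewrite scalerA mulrA.
  apply: (@rank_le1 _ _ (kronv (a i0) (b i0)) (\sum_j (t j * ((inner (a i0) (a j) * inner (b i0) (b j)) * (inner (a i0) (a j) * inner (b i0) (b j))^*)))).
  rewrite hP scaler_suml; exact: eq_bigr => j _.
apply: (@rank_le1 _ _ 0 0); rewrite hP scale0r big1 // => j _.
have := ht j; rewrite le_eqVlt => /orP [/eqP <-|tj]; first by rewrite scale0r.
by move/negP: hz; case; apply/existsP; exists j.
Qed.
End F2.
Section G.
Variable C : numClosedFieldType.
Variable n : nat.

Lemma gen_orth k (t : 'I_k -> C) (x : 'I_k -> 'cV[C]_n) (P : 'M[C]_n) (xi xj : 'cV[C]_n) :
  (forall l, 0 <= t l) -> P = \sum_(l < k) t l *: ketbra (x l) ->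
  P *m xi = xi -> P *m xj = xj -> inner xi xi = 1 -> inner xj xj = 1 ->
  (forall l, inner (x l) (x l) = 1) ->
  (forall l, 0 < t l -> exists al be, x l = al *: xi + be *: xj /\ al * be = 0) ->
  inner xi xj * (inner xi xj)^* != 1 ->
  inner xi xj = 0.
Proof.
move=> ht hP Pi Pj ni nj nx hcomb hg.
set g := inner xi xj.
have term : forall l,
   t l * inner (x l) xi * inner xi (x l) + t l * inner (x l) xj * inner xj (x l) = t l * (1 + g * g^*)
   /\ t l * inner (x l) xj * inner xi (x l) = t l * g.
  move=> l; have := ht l; rewrite le_eqVlt => /orP [/eqP <-|tl]; first by rewrite !mul0r addr0.
  have [al [be [hx hab]]] := hcomb l tl.
  have hn := nx l; rewrite hx in hn *.
  rewrite !(innerDl, innerDr, innerZl, innerZr) ni nj -/g (inner_conj xi xj) -/g.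
  rewrite !(innerDl, innerDr, innerZl, innerZr) ni nj -/g (inner_conj xi xj) -/g in hn.
  move/eqP: hab; rewrite mulf_eq0 => /orP [] /eqP e; rewrite e in hn *;
    rewrite ?rmorph0 ?mul0r ?mulr0 ?add0r ?addr0 in hn *.
  - rewrite !mulr1 in hn; split.
      transitivity (t l * ((be^* * be) * (g * g^*) + be^* * be)); first ring.
      by rewrite hn; ring.
    transitivity (t l * ((be^* * be) * g)); first ring.
    by rewrite hn; ring.
  - rewrite !mulr1 in hn; split.
      transitivity (t l * ((al^* * al) * (g * g^*) + al^* * al)); first ring.
      by rewrite hn; ring.
    transitivity (t l * ((al^* * al) * g)); first ring.
    by rewrite hn; ring.
set T := \sum_l t l.
have S12 : 1 + 1 = T * (1 + g * g^*).
  transitivity (inner xi (P *m xi) + inner xj (P *m xj)); first by rewrite Pi Pj ni nj.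
  rewrite {1}hP {1}hP !sumP_inner -big_split /= /T mulr_suml.
  by apply: eq_bigr => l _; case: (term l).
have S3 : g = T * g.
  rewrite {1}/g -{1}Pj {1}hP sumP_inner /T mulr_suml.
  by apply: eq_bigr => l _; case: (term l).
apply/eqP; apply: contraLR hg => gn0.
have T1 : T = 1.
  by apply: (mulIf gn0); rewrite mul1r -S3.
move: S12; rewrite T1 mul1r => /addrI h.
by rewrite negbK -h.
Qed.
End G.
Section H.
Variable C : numClosedFieldType.

Lemma core1 (P : 'M[C]_4) : orth_proj2 P -> separable P ->
  exists a b c d : 'cV[C]_2,
   [/\ [/\ inner a a = 1, inner b b = 1, inner c c = 1 & inner d d = 1],
       inner a c = 0 \/ inner b d = 0,
       P *m kronv a b = kronv a b, P *m kronv c d = kronv c d &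
       forall v, P *m v = v -> exists al be : C, v = al *: kronv a b + be *: kronv c d].
Proof.
move=> [hA [hI hR]] [k [t [a [b [ht [ha [hb hP0]]]]]]].
have {}ha : forall i, inner (a i) (a i) = 1 := ha.
have {}hb : forall i, inner (b i) (b i) = 1 := hb.
pose x i := kronv (a i) (b i).
have hP : P = \sum_(i < k) t i *: ketbra (x i).
  by rewrite hP0; apply: eq_bigr => i _; rewrite kronm_ketbra.
have hx : forall i, 0 < t i -> P *m x i = x i := F1 hA hI ht hP.
have nx : forall i, inner (x i) (x i) = 1 by move=> i; rewrite inner_kron ha hb mulr1.
have [i [j [ti tj hij]]] := step3 ht ha hb hP hR.
have hg : inner (x i) (x j) * (inner (x i) (x j))^* != 1.
  by rewrite /x inner_kron; apply: gneq1.
have span := span2 hR (hx i ti) (hx j tj) (nx i) (nx j) hg.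
have [ea|na] := eqVneq (det2v (a i) (a j)) 0.
-
  have db : det2v (b i) (b j) != 0 by move: hij; rewrite ea eqxx.
  set la := inner (a i) (a j).
  have haj : a j = la *: a i := parallel ea (ha i).
  have la0 : la != 0.
    apply/eqP => e; have := ha j; rewrite haj e scale0r inner0r => /eqP.
    by rewrite eq_sym oner_eq0.
  set b' := la *: b j.
  have xj' : x j = kronv (a i) b' by rewrite /x haj kronvZl kronvZr.
  set D := det2v (b i) b'.
  have D0 : D != 0 by rewrite /D det2vZr mulf_neq0.
  exists (a i), (b i), (a i), (bperp (b i)); split.
  + by rewrite inner_bperp_bperp.
  + by right; rewrite inner_bperp.
  + exact: hx.
  + have -> : kronv (a i) (bperp (b i)) =
       (D^-1 * det2v (bperp (b i)) b') *: x i + (D^-1 * det2v (b i) (bperp (b i))) *: x j.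
      rewrite xj' -!(scalerA D^-1) -scalerDr /x -!kronvZr -kronvDr -cramer2 -/D kronvZr scalerA mulVf //.
      by rewrite scale1r.
    by apply: Pcomb; apply: hx.
  + move=> v /span [al [be ->]].
    rewrite xj' /x -!kronvZr -kronvDr.
    set w := al *: b i + be *: b'.
    rewrite {1}(decomp2 w (hb i)) kronvDr !kronvZr.
    by exists (inner (b i) w), (inner (bperp (b i)) w).
have [eb|nb] := eqVneq (det2v (b i) (b j)) 0.
-
  set lb := inner (b i) (b j).
  have hbj : b j = lb *: b i := parallel eb (hb i).
  have lb0 : lb != 0.
    apply/eqP => e; have := hb j; rewrite hbj e scale0r inner0r => /eqP.
    by rewrite eq_sym oner_eq0.
  set a' := lb *: a j.
  have xj' : x j = kronv a' (b i) by rewrite /x hbj kronvZl kronvZr.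
  set D := det2v (a i) a'.
  have D0 : D != 0 by rewrite /D det2vZr mulf_neq0.
  exists (a i), (b i), (bperp (a i)), (b i); split.
  + by rewrite inner_bperp_bperp.
  + by left; rewrite inner_bperp.
  + exact: hx.
  + have -> : kronv (bperp (a i)) (b i) =
       (D^-1 * det2v (bperp (a i)) a') *: x i + (D^-1 * det2v (a i) (bperp (a i))) *: x j.
      rewrite xj' -!(scalerA D^-1) -scalerDr /x -!kronvZl -kronvDl -cramer2 -/D kronvZl scalerA mulVf //.
      by rewrite scale1r.
    by apply: Pcomb; apply: hx.
  + move=> v /span [al [be ->]].
    rewrite xj' /x -!kronvZl -kronvDl.
    set w := al *: a i + be *: a'.
    rewrite {1}(decomp2 w (ha i)) kronvDl !kronvZl.
    by exists (inner (a i) w), (inner (bperp (a i)) w).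
exists (a i), (b i), (a j), (b j); split => //.
- have := gen_orth ht hP (hx i ti) (hx j tj) (nx i) (nx j) nx _ hg.
  rewrite inner_kron => /(_ _) /eqP; rewrite mulf_eq0 => H.
  have {}H : (inner (a i) (a j) == 0) || (inner (b i) (b j) == 0).
    apply: H => l tl.
    have [al [be hl]] := span _ (hx l tl).
    exists al, be; split => //.
    have hd : det4 (x l) = 0 := det4_kron _ _.
    apply/eqP; move: hd; rewrite hl /x det4_comb => /eqP.
    by rewrite !mulf_eq0 (negbTE na) (negbTE nb) !orbF.
  by case/orP: H => /eqP; [left|right].
- exact: hx.
- exact: hx.
Qed.
End H.
Section I.
Variable C : numClosedFieldType.
Variable n : nat.

Lemma complete (f : 'I_n -> 'cV[C]_n) :
  (forall i j, inner (f i) (f j) = (i == j)%:R) ->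
  forall v, v = \sum_i inner (f i) v *: f i.
Proof.
move=> hf v.
pose U := \matrix_(r < n, k < n) f k r 0.
have h1 : adj U *m U = 1%:M.
  apply/matrixP => i j; rewrite !mxE -hf innerE; apply: eq_bigr => l _; rewrite !mxE.
  done.
have h2 := mulmx1C h1.
apply/matrixP => r c; rewrite (ord1 c).
have := congr1 (fun M => (M *m v) r 0) h2; rewrite mul1mx -mulmxA => <-.
rewrite mxE summxE; apply: eq_bigr => k _; rewrite !mxE innerE mulrC; congr (_ * _).
by apply: eq_bigr => l _; rewrite !mxE.
Qed.
End I.
Section I2.
Variable C : numClosedFieldType.

Lemma complete4 (e0 e1 e2 e3 v : 'cV[C]_4) :
  inner e0 e0 = 1 -> inner e1 e1 = 1 -> inner e2 e2 = 1 -> inner e3 e3 = 1 ->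
  inner e0 e1 = 0 -> inner e0 e2 = 0 -> inner e0 e3 = 0 ->
  inner e1 e2 = 0 -> inner e1 e3 = 0 -> inner e2 e3 = 0 ->
  inner e0 v = 0 -> inner e1 v = 0 ->
  v = inner e2 v *: e2 + inner e3 v *: e3.
Proof.
move=> n0 n1 n2 n3 o01 o02 o03 o12 o13 o23 v0 v1.
pose f (k : 'I_4) := nth 0 [:: e0; e1; e2; e3] k.
have c0 : forall x y : 'cV[C]_4, inner x y = 0 -> inner y x = 0.
  by move=> x y h; rewrite inner_conj h rmorph0.
have hf : forall i j, inner (f i) (f j) = (i == j)%:R.
  move=> [[|[|[|[|i]]]] Hi] [[|[|[|[|j]]]] Hj]; rewrite /f /=;
  by rewrite ?n0 ?n1 ?n2 ?n3 ?o01 ?o02 ?o03 ?o12 ?o13 ?o23 ?(c0 _ _ o01) ?(c0 _ _ o02) ?(c0 _ _ o03) ?(c0 _ _ o12) ?(c0 _ _ o13) ?(c0 _ _ o23).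
rewrite {1}(complete hf v) !big_ord_recr big_ord0 /= add0r /f /= v0 v1 !scale0r !add0r //.
Qed.
End I2.
Section J.
Variable C : numClosedFieldType.

Lemma char2 (M : 'M[C]_2) : char_poly M = 'X^2 - (\tr M) *: 'X + (\det M)%:P.
Proof.
apply/polyP => i.
have hs := size_char_poly M; have hm := char_poly_monic M.
have ht := char_poly_trace M isT; have hd := char_poly_det M.
rewrite !coefD !coefN coefZ coefX coefXn coefC.
case: i => [|[|[|i]]] /=.
- by rewrite hd sqrrN expr1n mul1r mulr0 subr0 add0r.
- by rewrite ht mulr1 sub0r addr0.
- move/monicP: hm; rewrite /lead_coef hs /= => ->; by rewrite mulr0 subr0 addr0.
- rewrite mulr0 subr0 addr0; apply: nth_default; by rewrite hs.
Qed.

Lemma tr2 (M : 'M[C]_2) : \tr M = M (inord 0) (inord 0) + M (inord 1) (inord 1).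
Proof. by rewrite /mxtrace sum2. Qed.

Lemma adj2_00 (B : 'M[C]_2) : \adj B (inord 0) (inord 0) = B (inord 1) (inord 1).
Proof.
rewrite mxE /cofactor det_mx11 !mxE inordK //= expr0 mul1r.
by congr (B _ _); apply/val_inj; rewrite /= !inordK.
Qed.
Lemma adj2_11 (B : 'M[C]_2) : \adj B (inord 1) (inord 1) = B (inord 0) (inord 0).
Proof.
rewrite mxE /cofactor det_mx11 !mxE inordK //= -signr_odd /= expr0 mul1r.
by congr (B _ _); apply/val_inj; rewrite /= !inordK.
Qed.
Lemma adj2_01 (B : 'M[C]_2) : \adj B (inord 0) (inord 1) = - B (inord 0) (inord 1).
Proof.
rewrite mxE /cofactor det_mx11 !mxE !inordK //= expr1 mulN1r.
by congr (- B _ _); apply/val_inj; rewrite /= !inordK.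
Qed.
Lemma adj2_10 (B : 'M[C]_2) : \adj B (inord 1) (inord 0) = - B (inord 1) (inord 0).
Proof.
rewrite mxE /cofactor det_mx11 !mxE !inordK //= expr1 mulN1r.
by congr (- B _ _); apply/val_inj; rewrite /= !inordK.
Qed.

Lemma tr_adj2 (A B : 'M[C]_2) : \tr (A *m \adj B) =
  A (inord 0) (inord 0) * B (inord 1) (inord 1) - A (inord 0) (inord 1) * B (inord 1) (inord 0)
  - A (inord 1) (inord 0) * B (inord 0) (inord 1) + A (inord 1) (inord 1) * B (inord 0) (inord 0).
Proof. rewrite tr2 !mxE !sum2 adj2_00 adj2_11 adj2_01 adj2_10; ring. Qed.

End J.
Section K.
Variable C : numClosedFieldType.
Implicit Types (v : 'cV[C]_4) (a b c d : 'cV[C]_2).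

Lemma assoc00 v : assoc_mx v (inord 0) (inord 0) = sqrtC 2 * v (inord 0) 0.
Proof. by rewrite mxE !inordK. Qed.
Lemma assoc01 v : assoc_mx v (inord 0) (inord 1) = sqrtC 2 * v (inord 2) 0.
Proof. by rewrite mxE !inordK. Qed.
Lemma assoc10 v : assoc_mx v (inord 1) (inord 0) = sqrtC 2 * v (inord 1) 0.
Proof. by rewrite mxE !inordK. Qed.
Lemma assoc11 v : assoc_mx v (inord 1) (inord 1) = sqrtC 2 * v (inord 3) 0.
Proof. by rewrite mxE !inordK. Qed.
Definition assocE := (assoc00, assoc01, assoc10, assoc11).

Lemma sqrt2K : sqrtC 2 * sqrtC 2 = 2 :> C.
Proof. by rewrite -expr2 sqrtCK. Qed.

Lemma det_assoc v : \det (assoc_mx v) = 2 * det4 v.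
Proof.
rewrite det2 !assocE /det4.
transitivity ((sqrtC 2 * sqrtC 2) * (v (inord 0) 0 * v (inord 3) 0 - v (inord 2) 0 * v (inord 1) 0)).
  ring.
rewrite sqrt2K; ring.
Qed.

End K.
Section K2.
Variable C : numClosedFieldType.

Lemma part2_alg (r1 s1 r2 s2 : 'cV[C]_2) (p q psi Phi : 'cV[C]_4) (x1 y1 x2 y2 : C) :
  p = kronv r1 s1 -> q = kronv r2 s2 ->
  inner p p = 1 -> inner q q = 1 -> inner p q = 0 ->
  psi = x1 *: p + y1 *: q -> Phi = x2 *: p + y2 *: q ->
  unit_vec psi -> unit_vec Phi -> inner psi Phi = 0 -> entangled psi -> entangled Phi ->
  two_antiparallel_eigenvalues (assoc_mx psi *m invmx (assoc_mx Phi))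
  /\ concurrence psi = concurrence Phi.
Proof.
move=> hp hq np nq opq hpsi hPhi upsi uPhi ortho epsi ePhi.
have oqp : inner q p = 0 by rewrite inner_conj opq rmorph0.
have hu1 : x1^* * x1 + y1^* * y1 = 1.
  move: upsi; rewrite /unit_vec hpsi !(innerDl, innerDr, innerZl, innerZr) np nq opq oqp.
  by rewrite !mulr0 !mulr1 addr0 add0r.
have hu2 : x2^* * x2 + y2^* * y2 = 1.
  move: uPhi; rewrite /unit_vec hPhi !(innerDl, innerDr, innerZl, innerZr) np nq opq oqp.
  by rewrite !mulr0 !mulr1 addr0 add0r.
have ho : x1^* * x2 + y1^* * y2 = 0.
  move: ortho; rewrite hpsi hPhi !(innerDl, innerDr, innerZl, innerZr) np nq opq oqp.
  by rewrite !mulr0 !mulr1 addr0 add0r.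
set K := det2v r1 r2 * det2v s1 s2.
have dA : \det (assoc_mx psi) = 2 * (x1 * y1 * K).
  by rewrite det_assoc hpsi hp hq det4_comb /K; ring.
have dB : \det (assoc_mx Phi) = 2 * (x2 * y2 * K).
  by rewrite det_assoc hPhi hp hq det4_comb /K; ring.
have two0 : (2 : C) != 0 by rewrite pnatr_eq0.
have nA : 2 * (x1 * y1 * K) != 0.
  by move: epsi; rewrite /entangled /concurrence dA normr_gt0.
have nB : 2 * (x2 * y2 * K) != 0.
  by move: ePhi; rewrite /entangled /concurrence dB normr_gt0.
move: (nA) (nB); rewrite !mulf_eq0 !negb_or => /and4P [_ /andP [x10 y10] Kr Ks] /and4P [_ /andP [x20 y20] _ _].
have K0 : K != 0 by rewrite /K mulf_neq0.
split.
- exists (x1 / x2), (y1 / y2); split.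
  + have uB : assoc_mx Phi \in unitmx by rewrite unitmxE unitfE dB.
    have hinv : invmx (assoc_mx Phi) = (\det (assoc_mx Phi))^-1 *: \adj (assoc_mx Phi).
      by rewrite /invmx uB.
    have htrA : \tr (assoc_mx psi *m \adj (assoc_mx Phi)) = 2 * ((x1 * y2 + x2 * y1) * K).
      rewrite tr_adj2 !assocE hpsi hPhi hp hq !(vE, kronvE) /K /det2v.
      rewrite -[in RHS]sqrt2K; ring.
    have htr : \tr (assoc_mx psi *m invmx (assoc_mx Phi)) = x1 / x2 + y1 / y2.
      rewrite hinv -scalemxAr mxtraceZ htrA dB; field.
      by rewrite x20 y20 K0.
    have hdet : \det (assoc_mx psi *m invmx (assoc_mx Phi)) = x1 / x2 * (y1 / y2).
      rewrite det_mulmx det_inv dA dB; field.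
      by rewrite x20 y20 K0.
    have := char2 (assoc_mx psi *m invmx (assoc_mx Phi)); rewrite htr hdet => ->.
    move: (x1 / x2) (y1 / y2) => z1 z2.
    rewrite -mul_polyC rmorphD rmorphM /=; ring.
  + have ho' : y1 * y2^* = - (x1 * x2^*).
      apply/eqP; rewrite -addr_eq0; apply/eqP.
      by have := congr1 Num.conj ho; rewrite rmorph0 rmorphD !rmorphM /= !conjCK => <-; ring.
    have x2c : x2^* != 0 by rewrite conjC_eq0.
    have y2c : y2^* != 0 by rewrite conjC_eq0.
    exists (- (`|y2| ^+ 2 / `|x2| ^+ 2)).
    have neg : - (`|y2| ^+ 2 / `|x2| ^+ 2) < 0.
      by rewrite oppr_lt0 divr_gt0 // exprn_gt0 // normr_gt0.
    split; first exact: ltr0_real.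
    split => //.
    rewrite !normCK.
    transitivity (- (y1 * y2^*) / (x2 * x2^*)); last by field; rewrite ?x20 ?y20 ?x2c ?y2c.
    rewrite ho' opprK; field; by rewrite ?x20 ?x2c.
- rewrite /concurrence dA dB !normrM; congr (_ * _); congr (_ * _).
  have n2 : forall z : C, z^* * z = `|z| ^+ 2 by move=> z; rewrite normCK mulrC.
  rewrite !n2 in hu1 hu2.
  have e3 : `|x1| ^+ 2 * `|x2| ^+ 2 = `|y1| ^+ 2 * `|y2| ^+ 2.
    have : x1^* * x2 = - (y1^* * y2) by apply/eqP; rewrite -addr_eq0 ho.
    move/(congr1 (fun z => `|z| ^+ 2)); rewrite normrN !normrM !norm_conjC; by rewrite !exprMn.
  have hy1 : `|y1| ^+ 2 = 1 - `|x1| ^+ 2 by rewrite -hu1; ring.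
  have hy2 : `|y2| ^+ 2 = 1 - `|x2| ^+ 2 by rewrite -hu2; ring.
  rewrite hy1 hy2 in e3.
  have hx2 : `|x2| ^+ 2 = 1 - `|x1| ^+ 2.
    apply/eqP; rewrite -subr_eq0; apply/eqP.
    transitivity (- ((1 - `|x1| ^+ 2) * (1 - `|x2| ^+ 2) - `|x1| ^+ 2 * `|x2| ^+ 2)); first ring.
    by rewrite e3 subrr oppr0.
  apply/eqP; rewrite -(@eqrXn2 _ 2) ?mulr_ge0 // !exprMn hy1 hy2 hx2.
  apply/eqP; ring.
Qed.
End K2.
Section L.
Variable C : numClosedFieldType.

Lemma part2_gen (P : 'M[C]_4) (e0 e1 : 'cV[C]_4) (r1 s1 r2 s2 : 'cV[C]_2) :
  in_range P e0 -> in_range P e1 ->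
  inner e0 e0 = 1 -> inner e1 e1 = 1 -> inner (kronv r1 s1) (kronv r1 s1) = 1 ->
  inner (kronv r2 s2) (kronv r2 s2) = 1 ->
  inner e0 e1 = 0 -> inner e0 (kronv r1 s1) = 0 -> inner e0 (kronv r2 s2) = 0 ->
  inner e1 (kronv r1 s1) = 0 -> inner e1 (kronv r2 s2) = 0 ->
  inner (kronv r1 s1) (kronv r2 s2) = 0 ->
  forall psi Phi : 'cV[C]_4,
      in_perp P psi -> in_perp P Phi ->
      unit_vec psi -> unit_vec Phi -> inner psi Phi = 0 ->
      entangled psi -> entangled Phi ->
      two_antiparallel_eigenvalues (assoc_mx psi *m invmx (assoc_mx Phi))
      /\ concurrence psi = concurrence Phi.
Proof.
move=> r0 r1' n0 n1 np nq o01 o0p o0q o1p o1q opq psi Phi ppsi pPhi upsi uPhi ortho epsi ePhi.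
have dpsi := complete4 n0 n1 np nq o01 o0p o0q o1p o1q opq (ppsi _ r0) (ppsi _ r1').
have dPhi := complete4 n0 n1 np nq o01 o0p o0q o1p o1q opq (pPhi _ r0) (pPhi _ r1').
exact: (part2_alg (erefl (kronv r1 s1)) (erefl (kronv r2 s2)) np nq opq dpsi dPhi upsi uPhi ortho epsi ePhi).
Qed.

End L.

Unset Implicit Arguments.
Theorem lemma1 (C : numClosedFieldType) (P : 'M[C]_4) :
  orth_proj2 P -> separable P ->
  (exists x1 x2 : 'cV[C]_4,
      [/\ product_state x1, product_state x2,
          in_range P x1 /\ in_range P x2,
          unit_vec x1 /\ unit_vec x2 /\ inner x1 x2 = 0
        & forall v, in_range P v -> exists c1 c2 : C, v = c1 *: x1 + c2 *: x2])
  /\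
  (forall psi Phi : 'cV[C]_4,
      in_perp P psi -> in_perp P Phi ->
      unit_vec psi -> unit_vec Phi -> inner psi Phi = 0 ->
      entangled psi -> entangled Phi ->
      two_antiparallel_eigenvalues (assoc_mx psi *m invmx (assoc_mx Phi))
      /\ concurrence psi = concurrence Phi).
Proof.
move=> hproj hsep.
have [a [b [c [d [[na nb nc nd] horth Pab Pcd span]]]]] := core1 hproj hsep.
have cj : forall (u v : 'cV[C]_2), inner u v = 0 -> inner v u = 0.
  by move=> u v h; rewrite inner_conj h rmorph0.
split.
- exists (kronv a b), (kronv c d); split.
  + by exists a, b.
  + by exists c, d.
  + by [].
  + rewrite /unit_vec !inner_kron na nb nc nd mulr1; split => //; split => //.
    by case: horth => ->; rewrite ?mul0r ?mulr0.
  + exact: span.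
case: horth => h.
- have H := (@part2_gen C P (kronv a b) (kronv c d) a (bperp b) c (bperp d)).
  apply: H => //;
  rewrite !inner_kron ?na ?nb ?nc ?nd ?inner_bperp_bperp ?nb ?nd ?h ?(cj _ _ h) ?inner_bperp
     ?mul0r ?mulr0 ?mulr1 //.
- have H := (@part2_gen C P (kronv a b) (kronv c d) (bperp a) b (bperp c) d).
  apply: H => //;
  rewrite !inner_kron ?na ?nb ?nc ?nd ?inner_bperp_bperp ?na ?nc ?h ?(cj _ _ h) ?inner_bperp
     ?mul0r ?mulr0 ?mulr1 //.
Qed.
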